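(* Let $p>3$ be a prime. Then $$\sum_{k=1}^{(p-3)/2}\frac{(-1)^k\binom{(p-1)/2}{k}\,(2H_{2k}-H_k)}{2k+1}\equiv -2(-1)^{(p-1)/2}q_p(2)^2\pmod p.$$
   Context: $H_n=\sum_{0<j\le n}1/j$ is the $n$-th harmonic number ($H_0=0$), and $q_p(2)=(2^{p-1}-1)/p$ is the Fermat quotient. Congruences between rationals modulo $p$ mean the difference is $p$ times a rational with denominator prime to $p$. *)

(* Defs.v *)
From HB Require Import structures.
From mathcomp Require Import all_boot all_order all_algebra.
Set Implicit Arguments. Unset Strict Implicit. Unset Printing Implicit Defensive.
Import Order.TTheory GRing.Theory Num.Theory.
Local Open Scope ring_scope.

Definition harm (n : nat) : rat := \sum_(1 <= j < n.+1) (j%:R)^-1.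

Definition fermat_quot2 (p : nat) : rat := ((2%:R : rat) ^+ p.-1 - 1) / p%:R.

Definition rat_cong (p : nat) (x y : rat) : Prop :=
  exists r : rat, x - y = p%:R * r /\ coprime p `|denq r|%N.

(* Main.v *)
Require Import Defs.
From HB Require Import structures.
From mathcomp Require Import all_boot all_order all_algebra.
From mathcomp Require Import ring zify.
Import Order.TTheory GRing.Theory Num.Theory.
Set Implicit Arguments. Unset Strict Implicit. Unset Printing Implicit Defensive.
Local Open Scope ring_scope.

Definition pint (p : nat) (r : rat) : Prop :=
  exists a b : int, ~~ (p %| `|b|)%N /\ r = a%:~R / b%:~R.

Section PInt.
Variable p : nat.
Hypothesis hp : prime p.

Lemma pint_int (z : int) : pint p z%:~R.
Proof.
exists z, 1; split; last by rewrite divr1.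
by rewrite /= dvdn1; apply/eqP=> e; move: (prime_gt1 hp); rewrite e.
Qed.

Lemma pint_nat (n : nat) : pint p n%:R.
Proof. by have := pint_int n; rewrite pmulrn. Qed.

Lemma pint0 : pint p 0. Proof. exact: (pint_nat 0). Qed.
Lemma pint1 : pint p 1. Proof. exact: (pint_nat 1). Qed.

Lemma nz_of_ndvd (b : int) : ~~ (p %| `|b|)%N -> b != 0.
Proof. by apply: contraNneq => ->; rewrite dvdn0. Qed.

Lemma ndvdM (b d : int) : ~~ (p %| `|b|)%N -> ~~ (p %| `|d|)%N -> ~~ (p %| `|(b * d)%R|)%N.
Proof. by move=> hb hd; rewrite abszM Euclid_dvdM // negb_or hb hd. Qed.

Lemma pintD x y : pint p x -> pint p y -> pint p (x + y).
Proof.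
move=> [a [b [hb ->]]] [c [d [hd ->]]].
exists (a * d + c * b), (b * d); split; first exact: ndvdM.
have b0 := nz_of_ndvd hb; have d0 := nz_of_ndvd hd.
rewrite rmorphD !rmorphM /=; field.
by rewrite !intr_eq0 b0 d0.
Qed.

Lemma pintM x y : pint p x -> pint p y -> pint p (x * y).
Proof.
move=> [a [b [hb ->]]] [c [d [hd ->]]].
exists (a * c), (b * d); split; first exact: ndvdM.
have b0 := nz_of_ndvd hb; have d0 := nz_of_ndvd hd.
rewrite !rmorphM /=; field.
by rewrite !intr_eq0 b0 d0.
Qed.

Lemma pintN x : pint p x -> pint p (- x).
Proof. by move=> h; rewrite -mulN1r; apply: pintM => //; exact: (pint_int (-1)). Qed.

Lemma pintB x y : pint p x -> pint p y -> pint p (x - y).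
Proof. by move=> hx hy; apply: pintD => //; apply: pintN. Qed.

Lemma pintX x n : pint p x -> pint p (x ^+ n).
Proof. move=> hx; elim: n => [|n IH]; first by rewrite expr0; exact: pint1.
by rewrite exprS; apply: pintM. Qed.

Lemma pint_sum (I : Type) (r : seq I) (P : pred I) (F : I -> rat) :
  (forall i, P i -> pint p (F i)) -> pint p (\sum_(i <- r | P i) F i).
Proof. by move=> h; apply: (big_ind (pint p)) => //; [exact: pint0|exact: pintD]. Qed.

Lemma pint_sum_nat m n (F : nat -> rat) :
  (forall i, (m <= i < n)%N -> pint p (F i)) -> pint p (\sum_(m <= i < n) F i).
Proof. by move=> h; rewrite big_nat_cond; apply: pint_sum => i /andP [hi _]; exact: h. Qed.

Lemma pint_invn (k : nat) : ~~ (p %| k)%N -> pint p (k%:R^-1).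
Proof.
move=> hk; exists 1, k; split => //.
by rewrite div1r pmulrn.
Qed.

Lemma pint_inv1p z : pint p z -> pint p ((1 - p%:R * z)^-1).
Proof.
move=> [a [b [hb ->]]].
have hb' : ~~ (p %| `|(b - p%:Z * a)%R|)%N.
  apply: contra hb => h.
  have -> : b = (b - p%:Z * a) + p%:Z * a by rewrite subrK.
  rewrite -[p in (p %| _)%N]/(`|p%:Z|%N) -dvdzE; apply: rpredD; first exact: h.
  by apply: dvdz_mulr; rewrite dvdzE dvdnn.
exists b, (b - p%:Z * a); split => //.
have b0 := nz_of_ndvd hb; have d0 := nz_of_ndvd hb'.
have d0' : (b - p%:Z * a)%:~R != 0 :> rat by rewrite intr_eq0.
move: d0'; rewrite rmorphB rmorphM /= => d0'.
rewrite -[p%:R]/(p%:Z%:~R) ; field.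
by rewrite d0' intr_eq0 b0.
Qed.

Lemma pint_cong x : pint p x -> coprime p `|denq x|.
Proof.
move=> [a [b [hb ->]]].
rewrite prime_coprime //; move: hb.
case: (divqP a b) => [|k y k0]; first by rewrite dvdn0.
by rewrite abszM; apply: contra => hd; rewrite dvdn_mull.
Qed.

Definition BT (n : nat) (f : nat -> rat) : rat :=
  \sum_(0 <= k < n.+1) (-1) ^+ k * ('C(n, k))%:R * f k.

Lemma BT_ext n f g : (forall k, f k = g k) -> BT n f = BT n g.
Proof. by move=> h; apply: eq_bigr => k _; rewrite h. Qed.

Lemma BTD n f g : BT n (fun k => f k + g k) = BT n f + BT n g.
Proof. by rewrite /BT -big_split; apply: eq_bigr => k _; rewrite mulrDr. Qed.

Lemma BTZ n c f : BT n (fun k => c * f k) = c * BT n f.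
Proof. by rewrite /BT mulr_sumr; apply: eq_bigr => k _; move: ((-1) ^+ k) => s; ring. Qed.

Lemma BTB n f g : BT n (fun k => f k - g k) = BT n f - BT n g.
Proof.
rewrite -[BT n g]mul1r -mulNr -BTZ -BTD; apply: BT_ext => k; ring.
Qed.

Lemma BT_S n f : BT n.+1 f = BT n f - BT n (fun k => f k.+1).
Proof.
pose G j := (-1) ^+ j * ('C(n, j))%:R * f j : rat.
have h1 : BT n f = G 0%N + \sum_(0 <= k < n) G k.+1 by rewrite /BT big_nat_recl.
have h2 : \sum_(0 <= k < n.+1) G k.+1 = \sum_(0 <= k < n) G k.+1.
  by rewrite big_nat_recr //= /G bin_small // mulr0 mul0r addr0.
rewrite /BT big_nat_recl //.
under eq_bigr => k _ do rewrite binS natrD exprS.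
rewrite -/(BT n f).
have -> : \sum_(0 <= i < n.+1) - 1 * (-1) ^+ i * (('C(n, i.+1))%:R + ('C(n, i))%:R) * f i.+1
   = \sum_(0 <= i < n.+1) G i.+1 - BT n (fun k => f k.+1).
  rewrite /BT -sumrB; apply: eq_bigr => k _; rewrite /G exprS; move: ((-1) ^+ k) => s; ring.
rewrite -/(BT n (fun k => f k.+1)) h2 h1 /G bin0 bin0 expr0; ring.
Qed.

Lemma BT_abs n f :
  BT n.+1 (fun j => j%:R * f j) = - (n.+1)%:R * BT n (fun k => f k.+1).
Proof.
rewrite /BT big_nat_recl // mul0r mulr0 add0r mulr_sumr.
apply: eq_bigr => k _.
have e : ('C(n.+1, k.+1) * k.+1)%N = (n.+1 * 'C(n, k))%N.
  by rewrite mulnC -mul_bin_diag.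
have e' : ('C(n.+1, k.+1))%:R * (k.+1)%:R = (n.+1)%:R * ('C(n, k))%:R :> rat.
  by rewrite -!natrM e.
rewrite exprS.
move: ((-1) ^+ k) => s.
transitivity (- 1 * s * (('C(n.+1, k.+1))%:R * (k.+1)%:R) * f k.+1); first ring.
rewrite e'; ring.
Qed.

Lemma BT_one n : BT n.+1 (fun _ => 1) = 0.
Proof. by rewrite BT_S subrr. Qed.

Lemma BT_psum m g :
  BT m.+1 (fun j => \sum_(0 <= i < j) g i) = - BT m g.
Proof.
rewrite BT_S -BTB -[BT m g]mul1r -mulNr -BTZ; apply: BT_ext => k.
by rewrite big_nat_recr //=; ring.
Qed.
Definition aa (k : nat) : rat := (((2 * k + 1)%N)%:R)^-1.
Definition OO (k : nat) : rat := \sum_(0 <= i < k) aa i.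
Definition cc (n : nat) : rat := BT n aa.
Definition TT (n : nat) : rat := BT n (fun k => aa k * OO k).

Lemma natr2k1 k : ((2 * k + 1)%N)%:R = 2 * k%:R + 1 :> rat.
Proof. by rewrite natrD natrM. Qed.

Lemma nz2k1 k : 2 * k%:R + 1 != 0 :> rat.
Proof. by rewrite -natr2k1 pnatr_eq0 addn1. Qed.

Lemma nzk1 k : k%:R + 1 != 0 :> rat.
Proof. by rewrite natr1 pnatr_eq0. Qed.

Lemma ja j : j%:R * aa j = 2^-1 * (1 - aa j).
Proof. rewrite /aa natr2k1; have := nz2k1 j; move: (j%:R) => x hx; field; by rewrite hx. Qed.

Lemma cc_rec n : cc n.+1 * (2 * n%:R + 3) = cc n * (2 * n%:R + 2).
Proof.
set X := BT n (fun k => aa k.+1).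
have E1 := BT_abs n aa; rewrite -/X in E1.
have E1' : BT n.+1 (fun j => j%:R * aa j) = 2^-1 * (BT n.+1 (fun _ => 1) - cc n.+1).
  by rewrite -BTB -BTZ; apply: BT_ext => j; exact: ja.
rewrite BT_one E1 in E1'.
have E2 : cc n = cc n.+1 + X by rewrite /cc BT_S -/X; ring.
rewrite E2.
have HX : X * (n%:R + 1) = cc n.+1 / 2.
  move: E1'; rewrite -natr1 => E.
  transitivity (- (- (n%:R + 1) * X)); first ring.
  rewrite E; ring.
transitivity (cc n.+1 * (2 * n%:R + 2) + 2 * (X * (n%:R + 1))); last ring.
rewrite HX; field => //.
Qed.

Lemma TT_rec n : TT n.+1 * (2 * n%:R + 3) = TT n * (2 * n%:R + 2) - cc n.
Proof.
set Y := BT n (fun k => aa k.+1 * OO k.+1).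
have E1 := BT_abs n (fun k => aa k * OO k); rewrite -/Y in E1.
have E1' : BT n.+1 (fun j => j%:R * (aa j * OO j)) = 2^-1 * (BT n.+1 OO - TT n.+1).
  rewrite -BTB -BTZ; apply: BT_ext => j; rewrite mulrA ja; ring.
have hO : BT n.+1 OO = - cc n by rewrite /cc -BT_psum.
rewrite hO E1 in E1'.
have E2 : TT n = TT n.+1 + Y by rewrite /TT BT_S -/Y; ring.
rewrite E2.
have HY : Y * (n%:R + 1) = (cc n + TT n.+1) / 2.
  move: E1'; rewrite -natr1 => E.
  transitivity (- (- (n%:R + 1) * Y)); first ring.
  rewrite E; ring.
transitivity (TT n.+1 * (2 * n%:R + 2) + 2 * (Y * (n%:R + 1)) - cc n); last ring.
rewrite HY; field => //.
Qed.

Lemma harmS n : harm n.+1 = harm n + (n%:R + 1)^-1.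
Proof. by rewrite /harm big_nat_recr //= natr1. Qed.

Lemma TT_closed n : TT n = - cc n * harm n / 2.
Proof.
elim: n => [|n IH].
  by rewrite /TT /harm /BT /OO !big_nat1 big_geq // mulr0 big_geq // mulr0 mul0r.
apply: (@mulIf _ (2 * n%:R + 3)).
  by have := nz2k1 n.+1; rewrite -natr1; apply: contra => /eqP h; apply/eqP; rewrite -h; ring.
rewrite TT_rec IH harmS.
transitivity (- (cc n.+1 * (2 * n%:R + 3)) * (harm n + (n%:R + 1)^-1) / 2); last ring.
rewrite cc_rec; have := nzk1 n; move: (n%:R) => x hx; field; by rewrite hx.
Qed.

Lemma cbin_rec n : (n.+1 * 'C(2 * n.+1, n.+1) = 2 * (2 * n + 1) * 'C(2 * n, n))%N.
Proof.
have e1 := mul_bin_diag (2 * n).+2 n.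
have e2 := mul_bin_diag (2 * n).+1 n.
have e3 := @bin_sub (2 * n).+1 n.
have h3 : ((2 * n).+1 - n = n.+1)%N by lia.
rewrite h3 in e3; simpl in e1, e2.
have -> : (2 * n.+1 = (2 * n).+2)%N by lia.
move: e1 e2 e3 (e3 (leqW (leq_pmull _ (isT : 0 < 2)%N))).
move: 'C((2 * n).+2, n.+1) 'C((2 * n).+1, n) 'C(2 * n, n) 'C((2 * n).+1, n.+1) => B2 B1 B0 B3.
move=> e1 e2 _ e3. nia.
Qed.

Lemma cc_closed n : cc n * (2 * n%:R + 1) * ('C(2 * n, n))%:R = 4 ^+ n.
Proof.
elim: n => [|n IH].
  rewrite /cc /BT big_nat1 /aa (_ : (2 * 0 + 1 = 1)%N) // (_ : (2 * 0 = 0)%N) // bin0 !expr0 mulr0 add0r !mulr1 invr1.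
have e := congr1 (fun m : nat => m%:R : rat) (cbin_rec n).
rewrite /= !natrM natr2k1 in e.
rewrite -natr1 exprS -IH.
transitivity (cc n.+1 * (2 * n%:R + 3) * ('C(2 * n.+1, n.+1))%:R); first ring.
rewrite cc_rec.
transitivity (cc n * 2 * ((n%:R + 1) * ('C(2 * n.+1, n.+1))%:R)); first ring.
rewrite natr1 e; ring.
Qed.

Hypothesis hp3 : (3 < p)%N.

Let p_gt1 : (1 < p)%N := prime_gt1 hp.

Lemma ndvd_small k : (0 < k < p)%N -> ~~ (p %| k)%N.
Proof.
move=> /andP [k0 kp]; apply/negP => /(dvdn_leq k0); rewrite leqNgt kp //.
Qed.

Lemma pnz : p%:R != 0 :> rat.
Proof. by rewrite pnatr_eq0 -lt0n prime_gt0. Qed.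

Lemma knz k : (0 < k)%N -> k%:R != 0 :> rat.
Proof. by rewrite pnatr_eq0 -lt0n. Qed.

Lemma pint_inv_small k : (0 < k < p)%N -> pint p (k%:R^-1).
Proof. by move=> h; apply: pint_invn; apply: ndvd_small. Qed.

Lemma ndvd_ge k : (0 < k < p)%N -> ~~ (p %| k)%N.
Proof. exact: ndvd_small. Qed.

Lemma pint_half : pint p (2%:R^-1).
Proof. by apply: pint_inv_small; rewrite /= ltnW. Qed.

Lemma pint_sixth : pint p (6%:R^-1).
Proof.
apply: pint_invn; rewrite (_ : 6 = 2 * 3)%N // Euclid_dvdM // negb_or.
by rewrite !ndvd_small //= ltnW // ltnW.
Qed.

Lemma harm_pint j : (j < p)%N -> pint p (harm j).
Proof.
move=> jp; apply: pint_sum_nat => i /andP [i1 ij].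
by apply: pint_inv_small; rewrite i1 /=; apply: leq_ltn_trans jp.
Qed.

Definition bres j : rat :=
  ((-1) ^+ j * ('C(p.-1, j))%:R - 1 + p%:R * harm j) / (p%:R ^+ 2).

Lemma bin_pm1S j : (j < p.-1)%N ->
  ('C(p.-1, j.+1))%:R = (p%:R - (j%:R + 1)) * ('C(p.-1, j))%:R / (j%:R + 1) :> rat.
Proof.
move=> jp.
have e := mul_bin_left p.-1 j.
have e' := congr1 (fun m : nat => m%:R : rat) e; rewrite /= !natrM natrB ?(ltnW jp) // in e'.
have hp1 : (p.-1)%:R = p%:R - 1 :> rat by rewrite -{2}(prednK (prime_gt0 hp)) -natr1 addrK.
rewrite hp1 -natr1 in e'.
have := nzk1 j; move: e'; move: (j%:R) ('C(p.-1, j.+1))%:R ('C(p.-1, j))%:R => x c1 c0 e' hx.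
apply: (@mulIf _ (x + 1)) => //.
rewrite mulrC e'; field; by rewrite hx.
Qed.

Lemma bres_pint j : (j < p)%N -> pint p (bres j).
Proof.
elim: j => [|j IH] hj.
  rewrite /bres /harm big_geq // bin0 expr0 mulr0 addr0 mul1r subrr mul0r; exact: pint0.
have jp : (j < p.-1)%N by rewrite -ltnS prednK // prime_gt0.
have -> : bres j.+1 = bres j + harm j * (j%:R + 1)^-1 - p%:R * bres j * (j%:R + 1)^-1.
  rewrite /bres bin_pm1S // harmS exprS.
  have := nzk1 j; have := pnz; move: (j%:R) (p%:R) => x P hP hx.
  move: ((-1) ^+ j) => s. field. by rewrite hx hP.
have hi : pint p ((j%:R + 1)^-1) by rewrite natr1; apply: pint_inv_small; rewrite /= hj.
have hb := IH (ltnW hj).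
apply: pintB; first apply: pintD => //; apply: pintM => //.
  by apply: harm_pint; apply: ltnW.
by apply: pintM => //; apply: pint_nat.
Qed.
 Local Open Scope nat_scope.

Definition gi (k : nat) : nat := ((k ^ (p - 2)) %% p)%N.

Lemma fermat1 k : (0 < k < p)%N -> k ^ p.-1 %% p = 1%N.
Proof.
move=> hk; have k0 : (0 < k)%N by case/andP: hk.
have := fermat_little k hp; move/eqP.
have ekp : (k ^ p = k * k ^ p.-1)%N by rewrite -expnS prednK // prime_gt0.
rewrite eqn_mod_dvd; last by rewrite ekp leq_pmulr // expn_gt0 k0.
rewrite ekp -[X in _ - X](muln1 k) -mulnBr Euclid_dvdM // (negPf (ndvd_small hk)) /= => hd.
have : (k ^ p.-1 == 1 %[mod p])%N by rewrite eqn_mod_dvd // expn_gt0 k0.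
by move/eqP => ->; rewrite modn_small.
Qed.

Lemma gi_mul k : (0 < k < p)%N -> (k * gi k) %% p = 1%N.
Proof.
move=> hk; rewrite /gi modnMmr -expnS.
have -> : (p - 2).+1 = p.-1 by lia.
exact: fermat1.
Qed.

Lemma gi_range k : (0 < k < p)%N -> (0 < gi k < p)%N.
Proof.
move=> hk; have := gi_mul hk; rewrite /gi ltn_mod (prime_gt0 hp) andbT lt0n => h1.
by apply/eqP => h; move: h1; rewrite h muln0 mod0n.
Qed.

Lemma gi_inv k : (0 < k < p)%N -> gi (gi k) = k.
Proof.
move=> hk; rewrite {1}/gi /gi modnXm -expnM.
have -> : ((p - 2) * (p - 2) = 1 + p.-1 * (p - 3))%N.
  have : (3 < p)%N := hp3; move: (p) => P hP.
  rewrite -subn1; nia.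
rewrite expnD expn1 expnM -modnMmr -modnXm fermat1 // exp1n (modn_small p_gt1) muln1.
case/andP: hk => _ kp; exact: modn_small.
Qed.
 Local Open Scope ring_scope.

Lemma gi_perm : perm_eq (map gi (index_iota 1 p)) (index_iota 1 p).
Proof.
have hrange k : (k \in index_iota 1 p) = (0 < k < p)%N by rewrite mem_index_iota.
apply: uniq_perm; last 1 first.
- move=> y; rewrite hrange; apply/mapP/idP.
    by case=> x; rewrite hrange => hx ->; apply: gi_range.
  by move=> hy; exists (gi y); [rewrite hrange; apply: gi_range | rewrite gi_inv].
- rewrite map_inj_in_uniq ?iota_uniq //.
  by move=> x y; rewrite !hrange => hx hy e; rewrite -(gi_inv hx) e gi_inv.
- exact: iota_uniq.
Qed.

Lemma sum_gi (F : nat -> rat) : \sum_(1 <= k < p) F (gi k) = \sum_(1 <= k < p) F k.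
Proof. by rewrite -(big_map gi xpredT F) (perm_big _ gi_perm). Qed.

Lemma sumsq m : (6 * \sum_(1 <= k < m.+1) k ^ 2 = m * m.+1 * (2 * m + 1))%N.
Proof.
elim: m => [|m IH]; first by rewrite big_geq.
rewrite big_nat_recr //= mulnDr IH; nia.
Qed.

Definition mk k := ((k * gi k) %/ p)%N.
Definition eps k : rat := - (mk k)%:R / k%:R.
Definition EE k : rat :=
  - (2 * (gi k)%:R * eps k + p%:R * eps k ^+ 2) + (k%:R ^+ 2 * ((p - k)%N)%:R)^-1.

Lemma mk_eq k : (0 < k < p)%N -> (k * gi k = mk k * p + 1)%N.
Proof. by move=> hk; rewrite /mk {1}(divn_eq (k * gi k) p) gi_mul. Qed.

Lemma inv_gi k : (0 < k < p)%N -> k%:R^-1 = (gi k)%:R + p%:R * eps k.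
Proof.
move=> hk; have k0 : (0 < k)%N by case/andP: hk.
have e := congr1 (fun m : nat => m%:R : rat) (mk_eq hk); rewrite /= natrD !natrM in e.
rewrite /eps; have := knz k0; move: e; move: (k%:R) (gi k)%:R (mk k)%:R => x g m e hx.
have -> : g = (m * p%:R + 1) / x by rewrite -e; field.
field; exact: hx.
Qed.

Lemma term_id k : (0 < k < p)%N ->
  k%:R^-1 + ((p - k)%N)%:R^-1 = - p%:R * (gi k)%:R ^+ 2 + p%:R ^+ 2 * EE k.
Proof.
move=> hk; have k0 : (0 < k)%N by case/andP: hk.
have pk0 : (0 < p - k)%N by rewrite subn_gt0; case/andP: hk.
have hpk : ((p - k)%N)%:R = p%:R - k%:R :> rat by rewrite natrB //; case/andP: hk => _ /ltnW.
have e := inv_gi hk.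
have hpk0 := knz pk0; rewrite hpk in hpk0.
rewrite /EE hpk.
have -> : (gi k)%:R = k%:R^-1 - p%:R * eps k :> rat by rewrite e addrK.
have := knz k0; move: hpk0; move: (k%:R) (p%:R) (eps k) => x P ep h1 h2.
field; by rewrite h1 h2.
Qed.

Lemma EE_pint k : (0 < k < p)%N -> pint p (EE k).
Proof.
move=> hk; have k0 : (0 < k)%N by case/andP: hk.
have pk : (0 < p - k < p)%N by case/andP: hk => _ kp; apply/andP; split; [rewrite subn_gt0 | rewrite ltn_subrL k0 prime_gt0].
have he : pint p (eps k).
  by rewrite /eps mulNr; apply: pintN; apply: pintM; [exact: pint_nat | exact: pint_inv_small].
rewrite /EE; apply: pintD.
  apply: pintN; apply: pintD; first by apply: pintM => //; apply: pintM; exact: pint_nat.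
  by apply: pintM; [exact: pint_nat | exact: pintX].
rewrite invfM; apply: pintM; last exact: pint_inv_small.
by rewrite -exprVn; apply: pintX; apply: pint_inv_small.
Qed.

Definition WW : rat := (\sum_(1 <= k < p) EE k - ((p.-1 * (2 * p.-1 + 1))%N)%:R / 6) / 2.

Lemma wolst : harm p.-1 = p%:R ^+ 2 * WW /\ pint p WW.
Proof.
split; last first.
  rewrite /WW; apply: pintM; last exact: pint_half.
  apply: pintB; first by apply: pint_sum_nat => k hk; apply: EE_pint.
  by apply: pintM; [exact: pint_nat | exact: pint_sixth].
have hH : harm p.-1 = \sum_(1 <= k < p) k%:R^-1 by rewrite /harm prednK // prime_gt0.
have hrev : \sum_(1 <= k < p) k%:R^-1 = \sum_(1 <= k < p) ((p - k)%N)%:R^-1 :> rat.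
  rewrite big_nat_rev; apply: eq_big_nat => i hi; congr (_%:R^-1); lia.
have h2 : 2 * harm p.-1 = - p%:R * \sum_(1 <= k < p) ((gi k)%:R ^+ 2) + p%:R ^+ 2 * \sum_(1 <= k < p) EE k.
  have -> : 2 * harm p.-1 = \sum_(1 <= k < p) (k%:R^-1 + ((p - k)%N)%:R^-1).
    by rewrite big_split /= -hrev -hH; ring.
  rewrite !mulr_sumr -big_split; apply: eq_big_nat => k hk; exact: term_id.
have hS : \sum_(1 <= k < p) ((gi k)%:R ^+ 2) = (\sum_(1 <= k < (p.-1).+1) (k ^ 2)%N)%:R :> rat.
  rewrite (sum_gi (fun k => (k%:R ^+ 2))) natr_sum prednK ?prime_gt0 //.
  by apply: eq_bigr => k _; rewrite natrX.
have e6 := congr1 (fun m : nat => m%:R : rat) (sumsq p.-1).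
rewrite /= natrM -hS (prednK (prime_gt0 hp)) in e6.
have hS' : \sum_(1 <= k < p) ((gi k)%:R ^+ 2) = p%:R * ((p.-1 * (2 * p.-1 + 1))%N)%:R / 6 :> rat.
  rewrite !natrM in e6; rewrite !natrM.
  apply: (@mulfI _ 6%:R); first by rewrite pnatr_eq0.
  by rewrite e6; field.
move: h2; rewrite hS' /WW; move: (harm p.-1) (\sum_(1 <= k < p) EE k) => H E h2.
have -> : H = (2 * H) / 2 by field => //.
rewrite h2; field => //.
Qed.

Lemma binpm1 j : ('C(p.-1, j))%:R = (-1) ^+ j * (1 - p%:R * (harm j - p%:R * bres j)) :> rat.
Proof.
rewrite /bres -signr_odd; have := pnz; move: (p%:R) ('C(p.-1, j))%:R (harm j) => P c H hP.
by case: (odd j); rewrite ?expr0 ?expr1; field.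
Qed.

Lemma alt_harm m :
  \sum_(1 <= k < (2 * m).+1) (-1) ^+ (k.-1) * k%:R^-1 = harm (2 * m) - harm m :> rat.
Proof.
elim: m => [|m IH]; first by rewrite muln0 big_geq // /harm big_geq // subrr.
have e : (2 * m.+1 = (2 * m).+2)%N by rewrite mulnS.
rewrite e big_nat_recr // big_nat_recr //= IH !harmS -e.
have s0 : (-1) ^+ (2 * m) = 1 :> rat by rewrite -signr_odd oddM /= expr0.
rewrite exprS s0 -[((2 * m).+1)%:R]natr1 !natrM -[(m.+1)%:R]natr1.
have := nzk1 m; have := nz2k1 m.
move: (m%:R) (harm (2 * m)) (harm m) => x a b h1 h2.
have h3 : 2 * x + 1 + 1 != 0 by rewrite -addrA (_ : 1 + 1 = 2 * 1) // -mulrDr mulf_neq0.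
field. by rewrite h1 h2 h3.
Qed.

Definition nn := ((p - 1) %/ 2)%N.

Lemma hnn : (p.-1 = 2 * nn)%N.
Proof.
have hodd : odd p.
  by apply/negPn/negP => /(prime_oddPn hp) e; move: hp3; rewrite e.
have : (p %% 2 = 1)%N by rewrite modn2 hodd.
rewrite /nn; lia.
Qed.

Definition ZZ : rat :=
  \sum_(1 <= k < p) (-1) ^+ (k.-1) * (harm k.-1 - p%:R * bres k.-1) / k%:R.

Lemma binp_div k : (0 < k < p)%N ->
  ('C(p, k))%:R / p%:R = (-1) ^+ (k.-1) * k%:R^-1
      - p%:R * ((-1) ^+ (k.-1) * (harm k.-1 - p%:R * bres k.-1) / k%:R) :> rat.
Proof.
move=> hk; have k0 : (0 < k)%N by case/andP: hk.
have e := mul_bin_diag p k.-1; rewrite prednK // in e.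
have e' := congr1 (fun m : nat => m%:R : rat) e; rewrite /= !natrM binpm1 in e'.
have := knz k0; have := pnz; move: e'.
move: (p%:R) (k%:R) ('C(p, k))%:R ((-1) ^+ k.-1) (harm k.-1) (bres k.-1) => P x c s H b e' hP hx.
have -> : c = P * (s * (1 - P * (H - P * b))) / x by rewrite e'; field.
field; by rewrite hP hx.
Qed.

Lemma two_q : 2 * fermat_quot2 p = harm p.-1 - harm nn - p%:R * ZZ.
Proof.
have h2p : (2 : rat) ^+ p = \sum_(0 <= k < p.+1) ('C(p, k))%:R.
  rewrite big_mkord -[2]/(1 + 1 : rat) exprD1n; apply: eq_bigr => i _.
  by rewrite expr1n.
have hsplit : \sum_(0 <= k < p.+1) ('C(p, k))%:R = 2 + \sum_(1 <= k < p) ('C(p, k))%:R :> rat.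
  have E (m : nat) (F : nat -> rat) :
      \sum_(0 <= k < m.+2) F k = F 0%N + \sum_(1 <= k < m.+1) F k + F m.+1.
    by rewrite big_nat_recl // big_nat_recr //= big_add1 /= addrA.
  have ep : p.+1 = (p.-1).+2 by rewrite prednK ?prime_gt0.
  rewrite ep E prednK ?prime_gt0 // bin0 binn; ring.
have hq : 2 * fermat_quot2 p = (\sum_(1 <= k < p) ('C(p, k))%:R) / p%:R.
  have e2 : (2 : rat) ^+ p = 2 * 2 ^+ p.-1 by rewrite -exprS prednK ?prime_gt0.
  have hS : \sum_(1 <= k < p) ('C(p, k))%:R = 2 * 2 ^+ p.-1 - 2 :> rat.
    by rewrite -e2 h2p hsplit; ring.
  rewrite hS /fermat_quot2; have := pnz; move: (p%:R) => P hP; field; exact: hP.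
have hsum : (\sum_(1 <= k < p) ('C(p, k))%:R) / p%:R
    = \sum_(1 <= k < p) (-1) ^+ (k.-1) * k%:R^-1 - p%:R * ZZ :> rat.
  rewrite /ZZ mulr_suml mulr_sumr -sumrB; apply: eq_big_nat => k hk; exact: binp_div.
rewrite hq hsum; congr (_ - _).
have -> : p = (2 * nn).+1 by rewrite -hnn prednK ?prime_gt0.
by rewrite alt_harm.
Qed.

Lemma harm_OO k : 2 * harm (2 * k) - harm k = 2 * OO k.
Proof.
elim: k => [|k IH]; first by rewrite /harm /OO !big_geq // mulr0 subrr mulr0.
have e : (2 * k.+1 = (2 * k).+2)%N by rewrite mulnS.
rewrite e !harmS /OO big_nat_recr //=.
have -> : \sum_(0 <= i < k) aa i = OO k by [].
have -> : OO k = (2 * harm (2 * k) - harm k) / 2 by rewrite IH; field => //.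
rewrite /aa natr2k1 -[((2 * k).+1)%:R]natr1 !natrM.
have := nzk1 k; have := nz2k1 k.
move: (k%:R) (harm (2 * k)) (harm k) => x a b h1 h2.
have h3 : 2 * x + 1 + 1 != 0 by rewrite -addrA (_ : 1 + 1 = 2 * 1) // -mulrDr mulf_neq0.
field. by rewrite h1 h2 h3.
Qed.

Lemma sum_ends (m : nat) (F : nat -> rat) :
  \sum_(0 <= k < m.+2) F k = F 0%N + \sum_(1 <= k < m.+1) F k + F m.+1.
Proof. by rewrite big_nat_recl // big_nat_recr //= big_add1 /= addrA. Qed.

Lemma mainT :
  rat_cong p
    (\sum_(1 <= k < ((p - 3) %/ 2).+1)
        (-1) ^+ k * ('C((p - 1) %/ 2, k))%:R * (2 * harm (2 * k) - harm k)
          / ((2 * k + 1)%N)%:R)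
    (- 2 * (-1) ^+ ((p - 1) %/ 2) * fermat_quot2 p ^+ 2).
Proof.
have hn := hnn; rewrite -/nn.
have n1 : (1 <= nn)%N by lia.
have e3 : ((p - 3) %/ 2).+1 = nn by rewrite /nn; lia.
rewrite e3.
set S := \sum_(1 <= k < nn) _.
pose F k := (-1) ^+ k * ('C(nn, k))%:R * (aa k * OO k).
have hS : S = 2 * (TT nn - (-1) ^+ nn * p%:R^-1 * OO nn).
  have hT : TT nn = F 0%N + \sum_(1 <= k < nn) F k + F nn.
    have en : nn.+1 = (nn.-1).+2 by rewrite prednK.
    by rewrite /TT /BT en sum_ends prednK.
  have hP : aa nn = p%:R^-1 by rewrite /aa -hn addn1 prednK ?prime_gt0.
  have hO0 : OO 0 = 0 by rewrite /OO big_geq.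
  rewrite hT /F hO0 binn hP.
  have -> : S = 2 * \sum_(1 <= k < nn) F k.
    rewrite /S mulr_sumr; apply: eq_bigr => k _; rewrite /F harm_OO /aa.
    move: ((-1) ^+ k) => s; ring.
  move: ((-1) ^+ nn) => s; ring.
have hTT := TT_closed nn.
have [hW hWp] := wolst.
have hq := two_q.
have hc := cc_closed nn.
have hP : (2 * nn%:R + 1) = p%:R :> rat by rewrite -natr2k1 -hn addn1 prednK ?prime_gt0.
have h4 : (4 : rat) ^+ nn = 1 + p%:R * fermat_quot2 p.
  rewrite (_ : (4 : rat) = 2 ^+ 2); last by rewrite expr2.
  rewrite -exprM -hn /fermat_quot2; have := pnz; move: (p%:R) => P hP0; field; exact: hP0.
rewrite hP -hn h4 binpm1 in hc.
have hO : OO nn = harm p.-1 - harm nn / 2.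
  have := harm_OO nn; rewrite -hn => e; apply: (@mulfI _ 2) => //; rewrite -e; field => //.
rewrite hW in hq hO.
have hq' : fermat_quot2 p = (p%:R ^+ 2 * WW - harm nn - p%:R * ZZ) / 2.
  by rewrite -hq; field => //.
have hC0 : ('C(p.-1, nn))%:R != 0 :> rat by rewrite pnatr_eq0 -lt0n bin_gt0 hn leq_pmull.
rewrite binpm1 in hC0.
have hu : 1 - p%:R * (harm nn - p%:R * bres nn) != 0.
  by move: hC0; rewrite mulf_eq0 negb_or => /andP [].
have hs : (-1) ^+ nn != 0 :> rat by rewrite signr_eq0.
have hcc : cc nn = (1 + p%:R * fermat_quot2 p) /
   (p%:R * ((-1) ^+ nn * (1 - p%:R * (harm nn - p%:R * bres nn)))).
  rewrite -hc; field; by rewrite hu hs pnz.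
have hZ : pint p ZZ.
  apply: pint_sum_nat => k /andP [k1 kp].
  have kp' : (k.-1 < p)%N by apply: leq_ltn_trans kp; apply: leq_pred.
  apply: pintM; last by apply: pint_inv_small; rewrite k1.
  apply: pintM; first by apply: pintX; exact: (pint_int (-1)).
  apply: pintB; first exact: harm_pint.
  by apply: pintM; [exact: pint_nat | exact: bres_pint].
have hnp : (nn < p)%N by rewrite -(prednK (prime_gt0 hp)) ltnS hn leq_pmull.
have hh : pint p (harm nn) := harm_pint hnp.
have hb : pint p (bres nn) := bres_pint hnp.
have hqp : pint p (fermat_quot2 p).
  rewrite hq'; apply: pintM; last exact: pint_half.
  apply: pintB; first apply: pintB => //; apply: pintM => //; try exact: pint_nat.
  by apply: pintX; exact: pint_nat.
rewrite hS hTT hcc hO.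
move: hqp; rewrite hq' => hqp.
pose P := p%:R : rat.
pose u := 1 - P * (harm nn - P * bres nn).
pose q := (P ^+ 2 * WW - harm nn - P * ZZ) / 2.
pose t := P * WW - ZZ.
exists ((-1) ^+ nn * ((2 * q ^+ 2 * (- harm nn + P * bres nn) + t * q + harm nn * (bres nn - t)) / u - 2 * WW)).
split.
  rewrite /q /t /u /P; have := pnz; move: hu.
  move: (p%:R) (harm nn) (bres nn) WW ZZ => P0 h b w Z hu0 hP0.
  rewrite -signr_odd; case: (odd nn); rewrite ?expr0 ?expr1; field; by rewrite hu0 hP0.
apply: pint_cong; apply: pintM; first by apply: pintX; exact: (pint_int (-1)).
have hP1 : pint p P by exact: pint_nat.
have ht : pint p t by rewrite /t; apply: pintB => //; apply: pintM.
apply: pintB; last by apply: pintM => //; exact: pint_nat.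
apply: pintM; last by rewrite /u; apply: pint_inv1p; apply: pintB => //; apply: pintM.
apply: pintD; first apply: pintD.
- apply: pintM; first by apply: pintM; [exact: pint_nat | exact: pintX].
  by apply: pintD; [exact: pintN | apply: pintM].
- exact: pintM.
- by apply: pintM => //; apply: pintB.
Qed.
End PInt.

Theorem mainTheorem7 (p : nat) (hp : prime p) (hp3 : (3 < p)%N) :
  rat_cong p
    (\sum_(1 <= k < ((p - 3) %/ 2).+1)
        (-1) ^+ k * ('C((p - 1) %/ 2, k))%:R * (2 * harm (2 * k) - harm k)
          / ((2 * k + 1)%N)%:R)
    (- 2 * (-1) ^+ ((p - 1) %/ 2) * fermat_quot2 p ^+ 2).
Proof. exact: (mainT hp hp3). Qed.
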